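(* Let $\lambda>0$ be the wavelength, let $N\ge 1$ be an integer, and let $\delta=\lambda/2$. For $n\in\{1,\dots,N\}$ let $\bar{x}_n=\left(n-\frac{N+1}{2}\right)\delta$ and $$\mathcal{A}_n=\left\{(x,y,0): |x-\bar{x}_n|\le \tfrac{\delta}{2},\ |y|\le \tfrac{\delta}{2}\right\},$$ and let $A=\delta^2$ denote the area of each $\mathcal{A}_n$. Let $z>0$ and $F>0$ with $z\neq F$, and define $$\hat{G}_{\rm ULA}=\frac{1}{(NA)^2}\left|\sum_{n=1}^N\int_{\mathcal{A}_n} e^{+\mathrm{i}\frac{2\pi}{\lambda}\left(\frac{x^2}{2F}+\frac{y^2}{2F}\right)}\,e^{-\mathrm{i}\frac{2\pi}{\lambda}\left(\frac{x^2}{2z}+\frac{y^2}{2z}\right)}\,dx\,dy\right|^2 .$$ Then, with $z_{\rm eff}=\frac{Fz}{|F-z|}$ and $a=\frac{\lambda}{8z_{\rm eff}}$, $$\hat{G}_{\rm ULA}=\frac{\left(C^2(\sqrt{a})+S^2(\sqrt{a})\right)\left(C^2(\sqrt{a}\,N)+S^2(\sqrt{a}\,N)\right)}{(Na)^2},$$ where $C$ and $S$ are the Fresnel integrals.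
   Context: The Fresnel integrals are $C(u)=\int_0^u\cos\left(\frac{\pi t^2}{2}\right)dt$ and $S(u)=\int_0^u\sin\left(\frac{\pi t^2}{2}\right)dt$. Physically, $\hat{G}_{\rm ULA}$ is the (Fresnel-approximated) normalized array gain of a uniform linear array of $N$ square antennas of side $\delta$ along the $x$-axis, centered at the origin, receiving from a transmitter at $(0,0,z)$ with matched filtering focused at $(0,0,F)$; $\mathrm{i}$ is the imaginary unit. *)

(* Defs.v *)
From Stdlib Require Import Reals.
From Coquelicot Require Import Coquelicot.
Open Scope R_scope.

Definition fresnelC (u : R) : R := RInt (fun t => cos (PI * t ^ 2 / 2)) 0 u.
Definition fresnelS (u : R) : R := RInt (fun t => sin (PI * t ^ 2 / 2)) 0 u.

Definition cis (theta : R) : C := (cos theta, sin theta).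

Definition delta (lam : R) : R := lam / 2.

Definition xbar (lam : R) (N n : nat) : R :=
  (INR n - (INR N + 1) / 2) * delta lam.

Definition integrand (lam z F x y : R) : C :=
  Cmult (cis (2 * PI / lam * (x ^ 2 / (2 * F) + y ^ 2 / (2 * F))))
        (cis (- (2 * PI / lam * (x ^ 2 / (2 * z) + y ^ 2 / (2 * z))))).

(* integral over the square A_n = [xbar_n - d/2, xbar_n + d/2] x [-d/2, d/2]
   (as an iterated Riemann integral; the integrand is continuous) *)
Definition antenna_integral (lam z F : R) (N n : nat) : C :=
  @RInt C_R_CompleteNormedModule (fun x => @RInt C_R_CompleteNormedModule (fun y => integrand lam z F x y)
                      (- delta lam / 2) (delta lam / 2))
       (xbar lam N n - delta lam / 2) (xbar lam N n + delta lam / 2).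

Definition area (lam : R) : R := delta lam ^ 2.

Definition G_ULA (lam z F : R) (N : nat) : R :=
  / (INR N * area lam) ^ 2 *
  (Cmod (@sum_n_m C_AbelianMonoid (fun n => antenna_integral lam z F N n) 1 N)) ^ 2.

Definition z_eff (z F : R) : R := F * z / Rabs (F - z).
Definition a_param (lam z F : R) : R := lam / (8 * z_eff z F).

(* Main.v *)
Require Import Defs.
From Stdlib Require Import Reals Lra Lia.
From Coquelicot Require Import Coquelicot.
Open Scope R_scope.
Lemma isRInt_C (f : R -> C) a b p q :
  is_RInt (fun t => fst (f t)) a b p -> is_RInt (fun t => snd (f t)) a b q ->
  @is_RInt C_R_NormedModule f a b (p, q).
Proof. intros H1 H2. exact (@is_RInt_fct_extend_pair R_NormedModule R_NormedModule f a b p q H1 H2). Qed.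
Lemma RInt_C (f : R -> C) a b p q :
  is_RInt (fun t => fst (f t)) a b p -> is_RInt (fun t => snd (f t)) a b q ->
  @RInt C_R_CompleteNormedModule f a b = (p, q).
Proof. intros H1 H2. apply is_RInt_unique. apply isRInt_C; auto. Qed.
Lemma isRInt_mult_l (f : R -> R) a b k l : is_RInt f a b l -> is_RInt (fun x => k * f x) a b (k * l).
Proof. intros H. exact (@is_RInt_scal R_NormedModule f a b k l H). Qed.
Lemma isRInt_mult_r (f : R -> R) a b k l : is_RInt f a b l -> is_RInt (fun x => f x * k) a b (l * k).
Proof. intros H. apply (is_RInt_ext (fun x => k * f x)). intros; simpl; ring.
  replace (l * k) with (k * l) by ring. apply isRInt_mult_l; auto. Qed.
Lemma isRInt_minus' (f g : R -> R) a b l1 l2 : is_RInt f a b l1 -> is_RInt g a b l2 -> is_RInt (fun x => f x - g x) a b (l1 - l2).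
Proof. intros H1 H2. exact (@is_RInt_minus R_NormedModule f g a b l1 l2 H1 H2). Qed.
Lemma isRInt_plus' (f g : R -> R) a b l1 l2 : is_RInt f a b l1 -> is_RInt g a b l2 -> is_RInt (fun x => f x + g x) a b (l1 + l2).
Proof. intros H1 H2. exact (@is_RInt_plus R_NormedModule f g a b l1 l2 H1 H2). Qed.
Lemma exs (c u v : R) : ex_RInt (fun t => sin (c * t^2)) u v.
Proof. apply (@ex_RInt_continuous R_CompleteNormedModule); intros t _. apply (@ex_derive_continuous R_AbsRing R_NormedModule). auto_derive. auto. Qed.

Lemma even_RInt (f : R -> R) T : (forall u v, ex_RInt f u v) -> (forall t, f (- t) = f t) ->
  RInt f (- T) T = 2 * RInt f 0 T.
Proof.
  intros Hex Hev.
  rewrite <- (RInt_Chasles f (-T) 0 T) by auto.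
  assert (H : RInt f 0 (-T) = - RInt f 0 T).
  { pose proof (RInt_comp_lin f (-1) 0 0 T) as H.
    replace (-1 * 0 + 0) with 0 in H by ring.
    replace (-1 * T + 0) with (-T) in H by ring.
    rewrite <- H by auto.
    rewrite (RInt_ext _ (fun y => opp (f y))).
    - rewrite (@RInt_opp R_CompleteNormedModule) by auto. reflexivity.
    - intros y _. rewrite <- Hev. unfold scal, opp; simpl. unfold mult; simpl.
      replace (- (-1 * y + 0)) with y by ring. ring. }
  rewrite <- (opp_RInt_swap f 0 (-T)) by auto. rewrite H.
  unfold opp, plus; simpl. ring.
Qed.

Definition fC (t : R) := cos (PI * t ^ 2 / 2).
Definition fS (t : R) := sin (PI * t ^ 2 / 2).

Lemma scal_key (g : R -> R) (k L : R) : 0 < k ->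
  (forall u v, ex_RInt (fun t => g (PI * t ^ 2 / 2)) u v) ->
  (forall u v, ex_RInt (fun t => g (k * t ^ 2)) u v) ->
  sqrt (2 * k / PI) * RInt (fun t => g (k * t ^ 2)) (- L) L
  = 2 * RInt (fun t => g (PI * t ^ 2 / 2)) 0 (sqrt (2 * k / PI) * L).
Proof.
  intros Hk He1 He2.
  set (s := sqrt (2 * k / PI)).
  assert (Hs : s ^ 2 = 2 * k / PI).
  { unfold s. rewrite pow2_sqrt; auto. apply Rlt_le. apply Rdiv_lt_0_compat; [lra | apply PI_RGT_0]. }
  pose proof PI_RGT_0 as HPI.
  assert (H1 : RInt (fun y => s * g (k * y ^ 2)) (-L) L = s * RInt (fun t => g (k * t ^ 2)) (- L) L)
    by exact (RInt_scal (fun t => g (k * t ^ 2)) (-L) L s (He2 _ _)).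
  rewrite <- H1.
  rewrite (@RInt_ext R_CompleteNormedModule _ (fun y => scal s (g (PI * (s * y + 0) ^ 2 / 2)))).
  2:{ intros y _. replace (PI * (s * y + 0) ^ 2 / 2) with (k * y ^ 2). reflexivity.
      replace ((s * y + 0) ^ 2) with (s ^ 2 * y ^ 2) by ring. rewrite Hs. field. lra. }
  transitivity (RInt (fun t => g (PI * t ^ 2 / 2)) (s * - L + 0) (s * L + 0)).
  { exact (@RInt_comp_lin R_CompleteNormedModule (fun t => g (PI * t ^ 2 / 2)) s 0 (-L) L (He1 _ _)). }
  replace (s * - L + 0) with (- (s * L)) by ring.
  replace (s * L + 0) with (s * L) by ring.
  apply even_RInt; auto.
  intros t. f_equal. f_equal. ring.
Qed.

Ltac exr := intros; apply (@ex_RInt_continuous R_CompleteNormedModule); intros;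
  apply (@ex_derive_continuous R_AbsRing R_NormedModule); auto_derive; auto.

Lemma PQ (c L : R) : c <> 0 ->
  (sqrt (2 * Rabs c / PI) * RInt (fun t => cos (c * t ^ 2)) (- L) L) ^ 2 +
  (sqrt (2 * Rabs c / PI) * RInt (fun t => sin (c * t ^ 2)) (- L) L) ^ 2 =
  4 * (RInt (fun t => cos (PI * t ^ 2 / 2)) 0 (sqrt (2 * Rabs c / PI) * L) ^ 2 +
       RInt (fun t => sin (PI * t ^ 2 / 2)) 0 (sqrt (2 * Rabs c / PI) * L) ^ 2).
Proof.
  intros Hc.
  destruct (Rlt_or_le 0 c) as [Hp | Hn].
  - rewrite (Rabs_pos_eq c) by lra.
    rewrite (scal_key cos c L Hp) by exr.
    rewrite (scal_key sin c L Hp) by exr.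
    ring.
  - assert (Hn' : 0 < - c) by lra.
    rewrite (Rabs_left1 c) by lra.
    rewrite (RInt_ext (fun t => cos (c * t ^ 2)) (fun t => cos (- c * t ^ 2))).
    2:{ intros x _. rewrite <- cos_neg. f_equal. ring. }
    rewrite (RInt_ext (fun t => sin (c * t ^ 2)) (fun t => opp (sin (- c * t ^ 2)))).
    2:{ intros x _. unfold opp; simpl. rewrite <- sin_neg. f_equal. ring. }
    rewrite (@RInt_opp R_CompleteNormedModule) by apply exs.
    rewrite (scal_key cos (-c) L Hn') by exr.
    set (X := RInt (fun t => sin (- c * t ^ 2)) (- L) L). change (@opp _ X) with (- X). unfold X.
    replace (sqrt (2 * - c / PI) * - RInt (fun t : R => sin (- c * t ^ 2)) (- L) L) with
      (- (sqrt (2 * - c / PI) * RInt (fun t : R => sin (- c * t ^ 2)) (- L) L)) by ring.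
    rewrite (scal_key sin (-c) L Hn') by exr.
    ring.
Qed.


Theorem theorem1 (lam : R) (N : nat) (z F : R) :
  0 < lam -> (1 <= N)%nat -> 0 < z -> 0 < F -> z <> F ->
  let a := a_param lam z F in
  G_ULA lam z F N =
  (fresnelC (sqrt a) ^ 2 + fresnelS (sqrt a) ^ 2) *
  (fresnelC (sqrt a * INR N) ^ 2 + fresnelS (sqrt a * INR N) ^ 2) /
  (INR N * a) ^ 2.
Proof.
  intros Hlam HN Hz HF HzF a.
  set (c := 2 * PI / lam * (1 / (2 * F)) - 2 * PI / lam * (1 / (2 * z))).
  assert (HA : forall x y, integrand lam z F x y =
    (cos (c * x ^ 2) * cos (c * y ^ 2) - sin (c * x ^ 2) * sin (c * y ^ 2),
     sin (c * x ^ 2) * cos (c * y ^ 2) + cos (c * x ^ 2) * sin (c * y ^ 2))).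
  { intros x y. unfold integrand, cis, Cmult. cbn [fst snd].
    set (A := 2 * PI / lam * (x ^ 2 / (2 * F) + y ^ 2 / (2 * F))).
    set (B := - (2 * PI / lam * (x ^ 2 / (2 * z) + y ^ 2 / (2 * z)))).
    assert (HAB : A + B = c * x ^ 2 + c * y ^ 2) by (unfold A, B, c; field; lra).
    f_equal.
    - rewrite <- cos_plus, HAB, cos_plus. reflexivity.
    - replace (cos A * sin B + sin A * cos B) with (sin (A + B)) by (rewrite sin_plus; ring).
      rewrite HAB, sin_plus. ring. }
  set (d := delta lam).
  set (PY := RInt (fun t => cos (c * t ^ 2)) (- d / 2) (d / 2)).
  set (QY := RInt (fun t => sin (c * t ^ 2)) (- d / 2) (d / 2)).
  assert (HI : forall x, @RInt C_R_CompleteNormedModule (fun y => integrand lam z F x y) (- d / 2) (d / 2) =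
     (cos (c * x ^ 2) * PY - sin (c * x ^ 2) * QY, sin (c * x ^ 2) * PY + cos (c * x ^ 2) * QY)).
  { intros x. apply RInt_C.
    - apply (is_RInt_ext (fun t => cos (c * x ^ 2) * cos (c * t ^ 2) - sin (c * x ^ 2) * sin (c * t ^ 2))).
      { intros t _. rewrite HA. reflexivity. }
      apply isRInt_minus'; apply isRInt_mult_l; apply (RInt_correct (V := R_CompleteNormedModule)); exr.
    - apply (is_RInt_ext (fun t => sin (c * x ^ 2) * cos (c * t ^ 2) + cos (c * x ^ 2) * sin (c * t ^ 2))).
      { intros t _. rewrite HA. reflexivity. }
      apply isRInt_plus'; apply isRInt_mult_l; apply (RInt_correct (V := R_CompleteNormedModule)); exr. }
  assert (HAn : forall n, antenna_integral lam z F N n =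
    Cmult (RInt (fun t => cos (c * t ^ 2)) (xbar lam N n - d / 2) (xbar lam N n + d / 2),
           RInt (fun t => sin (c * t ^ 2)) (xbar lam N n - d / 2) (xbar lam N n + d / 2)) (PY, QY)).
  { intros n. unfold antenna_integral. fold d.
    rewrite (@RInt_ext C_R_CompleteNormedModule (fun x => @RInt C_R_CompleteNormedModule (fun y => integrand lam z F x y) (- d / 2) (d / 2)) (fun x => (cos (c * x ^ 2) * PY - sin (c * x ^ 2) * QY, sin (c * x ^ 2) * PY + cos (c * x ^ 2) * QY)))
      by (intros; apply HI).
    unfold Cmult; cbn [fst snd]. apply RInt_C.
    - apply isRInt_minus'; apply isRInt_mult_r; apply (RInt_correct (V := R_CompleteNormedModule)); exr.
    - eapply is_RInt_ext; [| apply isRInt_plus'; apply isRInt_mult_r; apply (RInt_correct (V := R_CompleteNormedModule)); exr].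
      intros t _. simpl. ring. }
  set (L0 := - (INR N * d / 2)).
  assert (HSum : forall k, @sum_n_m C_AbelianMonoid (fun n => antenna_integral lam z F N n) 1 k =
    Cmult (RInt (fun t => cos (c * t ^ 2)) L0 (L0 + INR k * d),
           RInt (fun t => sin (c * t ^ 2)) L0 (L0 + INR k * d)) (PY, QY)).
  { induction k.
    - rewrite sum_n_m_zero by lia. simpl INR. replace (L0 + 0 * d) with L0 by ring.
      rewrite !RInt_point. apply injective_projections; simpl; unfold zero; simpl; ring.
    - rewrite sum_n_Sm by lia. rewrite IHk, HAn.
      replace (xbar lam N (S k) - d / 2) with (L0 + INR k * d)
        by (unfold xbar, L0; fold d; rewrite S_INR; field).
      replace (xbar lam N (S k) + d / 2) with (L0 + INR (S k) * d)
        by (unfold xbar, L0; fold d; rewrite S_INR; field).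
      rewrite <- (RInt_Chasles (fun t => cos (c * t ^ 2)) L0 (L0 + INR k * d) (L0 + INR (S k) * d)) by exr.
      rewrite <- (RInt_Chasles (fun t => sin (c * t ^ 2)) L0 (L0 + INR k * d) (L0 + INR (S k) * d)) by exr.
      set (I1 := RInt (fun t => cos (c * t ^ 2)) L0 (L0 + INR k * d)).
      set (I2 := RInt (fun t => sin (c * t ^ 2)) L0 (L0 + INR k * d)).
      set (I3 := RInt (fun t => cos (c * t ^ 2)) (L0 + INR k * d) (L0 + INR (S k) * d)).
      set (I4 := RInt (fun t => sin (c * t ^ 2)) (L0 + INR k * d) (L0 + INR (S k) * d)).
      clearbody I1 I2 I3 I4. unfold plus, Cmult; simpl. apply injective_projections; simpl; ring. }
  assert (Hc : c <> 0).
  { unfold c. intro H. apply HzF.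
    assert (H2 : PI * (z - F) / (lam * F * z) = 0) by (rewrite <- H; field; lra).
    pose proof PI_RGT_0.
    unfold Rdiv in H2. apply Rmult_integral in H2. destruct H2 as [H2|H2].
    - apply Rmult_integral in H2. destruct H2; lra.
    - exfalso. revert H2. apply Rinv_neq_0_compat. apply Rgt_not_eq.
      apply Rmult_lt_0_compat; [apply Rmult_lt_0_compat|]; lra. }
  assert (Habs : Rabs c = PI * Rabs (F - z) / (lam * F * z)).
  { replace c with (PI / (lam * F * z) * (z - F)) by (unfold c; field; lra).
    rewrite Rabs_mult, Rabs_minus_sym. rewrite (Rabs_pos_eq (PI / (lam * F * z))).
    - field; lra.
    - apply Rlt_le, Rdiv_lt_0_compat; [apply PI_RGT_0|]. apply Rmult_lt_0_compat; [apply Rmult_lt_0_compat|]; lra. }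
  assert (HFz : 0 < Rabs (F - z)) by (apply Rabs_pos_lt; lra).
  pose proof PI_RGT_0 as HPI.
  set (s := sqrt (2 * Rabs c / PI)).
  assert (Hs2 : s ^ 2 = 2 * Rabs c / PI).
  { unfold s. rewrite pow2_sqrt; auto. apply Rlt_le, Rdiv_lt_0_compat; [|lra].
    pose proof (Rabs_pos_lt c Hc); lra. }
  assert (Hs : 0 < s).
  { unfold s. apply sqrt_lt_R0. apply Rdiv_lt_0_compat; [|lra]. pose proof (Rabs_pos_lt c Hc); lra. }
  assert (Ha : a = (s * lam / 4) ^ 2).
  { replace ((s * lam / 4) ^ 2) with (s ^ 2 * lam ^ 2 / 16) by field.
    rewrite Hs2, Habs. unfold a, a_param, z_eff. field. repeat split; lra. }
  assert (Hsa : sqrt a = s * lam / 4).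
  { rewrite Ha. apply sqrt_pow2. apply Rlt_le. apply Rmult_lt_0_compat; [apply Rmult_lt_0_compat|]; lra. }
  unfold G_ULA. rewrite HSum.
  replace (L0 + INR N * d) with (INR N * d / 2) by (unfold L0; lra).
  unfold L0.
  set (PX := RInt (fun t => cos (c * t ^ 2)) (- (INR N * d / 2)) (INR N * d / 2)).
  set (QX := RInt (fun t => sin (c * t ^ 2)) (- (INR N * d / 2)) (INR N * d / 2)).
  pose proof (PQ c (INR N * d / 2) Hc) as HX. fold s PX QX in HX.
  pose proof (PQ c (d / 2) Hc) as HY. fold s in HY.
  replace (- (d / 2)) with (- d / 2) in HY by field. fold PY QY in HY.
  replace (s * (INR N * d / 2)) with (sqrt a * INR N) in HX by (rewrite Hsa; unfold d, delta; field).
  replace (s * (d / 2)) with (sqrt a) in HY by (rewrite Hsa; unfold d, delta; field).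
  fold (fresnelC (sqrt a * INR N)) (fresnelS (sqrt a * INR N)) in HX.
  fold (fresnelC (sqrt a)) (fresnelS (sqrt a)) in HY.
  set (X := fresnelC (sqrt a * INR N) ^ 2 + fresnelS (sqrt a * INR N) ^ 2) in *.
  set (Y := fresnelC (sqrt a) ^ 2 + fresnelS (sqrt a) ^ 2) in *.
  assert (E1 : PX ^ 2 + QX ^ 2 = 4 * X / s ^ 2) by (rewrite <- HX; field; lra).
  assert (E2 : PY ^ 2 + QY ^ 2 = 4 * Y / s ^ 2) by (rewrite <- HY; field; lra).
  unfold Cmod, Cmult. cbn [fst snd].
  rewrite pow2_sqrt by (apply Rplus_le_le_0_compat; apply pow2_ge_0).
  replace ((PX * PY - QX * QY) ^ 2 + (PX * QY + QX * PY) ^ 2) with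
    ((PX ^ 2 + QX ^ 2) * (PY ^ 2 + QY ^ 2)) by ring.
  rewrite E1, E2, Ha. unfold area, d, delta.
  assert (HN0 : 0 < INR N) by (apply lt_0_INR; lia).
  field. repeat split; lra.
Qed.
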